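(* For every compact subset $K\subset\partial^2\Gamma$ there exists a constant $C$ with the following property. Suppose $\xi,\eta,\eta'\in\partial\Gamma$ and $g\in\Gamma$ satisfy $(\xi,\eta)\in K$, $(\xi,\eta')\in K$, $(g\xi,g\eta)\in K$, and $\sigma(g,\xi)<0$. Put $t=-\sigma(g,\xi)>0$. Then $\sigma(g,\eta)\in[t-C,t+C]$, $\sigma(g,\eta')\in[t-C,t+C]$, and $d_{\partial\Gamma}(g\eta,g\eta')<\alpha^{t-C}$.
   Context: $\Gamma$ is a countable non-elementary group acting properly and cocompactly by isometries on a proper, Gromov-hyperbolic, quasi-convex metric space $(M,d_M)$ (quasi-convex: any two distinct points of $M\sqcup\partial M$ are joined by a $C_0$-almost-geodesic for a uniform $C_0$). $o\in M$ is a fixed base point. $\partial\Gamma=\partial M$ is the Gromov boundary and $\partial^2\Gamma=\{(\xi,\eta):\xi\ne\eta\}$, with its natural topology. Gromov product. $(x|y)_z=\tfrac12(d_M(x,z)+d_M(y,z)-d_M(x,y))$, extended to boundary points by $(\xi|\eta)_o=\inf\liminf_i(x_i|y_i)_o$ over sequences $x_i\to\xi$, $y_i\to\eta$. Visual metric. $d_{\partial\Gamma}$ is a fixed visual metric on $\partial\Gamma$ of the form $d_{\partial\Gamma}(\xi,\eta)=\alpha^{(\xi|\eta)_o+b(\xi,\eta)}$, where $\alpha\in(0,1)$ is a fixed parameter and $b$ is uniformly bounded. Busemann cocycle. $\sigma(g,\xi)=\limsup_{x\to\xi}(d_M(g^{-1}o,x)-d_M(o,x))$. *)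

(* Defs.v *)
From Stdlib Require Import Reals List.
Open Scope R_scope.

Section Hyp.
Context {M : Type} (d : M -> M -> R).

Definition is_metric : Prop :=
  (forall x y, 0 <= d x y) /\ (forall x y, d x y = 0 <-> x = y) /\
  (forall x y, d x y = d y x) /\ (forall x y z, d x z <= d x y + d y z).

Definition gprod (w x y : M) : R := (d x w + d y w - d x y) / 2.

Definition gromov_hyperbolic : Prop :=
  exists delta, 0 <= delta /\ forall x y z w,
    Rmin (gprod w x y) (gprod w y z) - delta <= gprod w x z.

Definition proper_space : Prop :=
  forall (x : M) (r : R) (u : nat -> M), (forall n, d x (u n) <= r) ->
    exists (phi : nat -> nat) (y : M), (forall n, (phi n < phi (S n))%nat) /\
      Un_cv (fun n => d (u (phi n)) y) 0.

Variable o : M.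

Definition gromov_seq (x : nat -> M) : Prop :=
  forall N, exists n0, forall m n, (n0 <= m)%nat -> (n0 <= n)%nat ->
    N <= gprod o (x m) (x n).

Definition gromov_equiv (x y : nat -> M) : Prop :=
  forall N, exists n0, forall m n, (n0 <= m)%nat -> (n0 <= n)%nat ->
    N <= gprod o (x m) (y n).

(** A boundary point is an equivalence class of sequences converging to infinity. *)
Definition is_bclass (S : (nat -> M) -> Prop) : Prop :=
  exists x, gromov_seq x /\ forall y, S y <-> (gromov_seq y /\ gromov_equiv x y).

Definition bnd : Type := { S : (nat -> M) -> Prop | is_bclass S }.

Definition conv_to (xi : bnd) (x : nat -> M) : Prop := proj1_sig xi x.

Definition almost_geodesic (C0 : R) (I : R -> Prop) (gam : R -> M) : Prop :=
  forall s t, I s -> I t -> Rabs (d (gam s) (gam t) - Rabs (s - t)) <= C0.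

Definition quasi_convex_space : Prop :=
  exists C0, 0 <= C0 /\
  (forall x y : M, x <> y -> exists a b (gam : R -> M), a <= b /\
      almost_geodesic C0 (fun s => a <= s <= b) gam /\ gam a = x /\ gam b = y) /\
  (forall (x : M) (xi : bnd), exists gam : R -> M,
      almost_geodesic C0 (fun s => 0 <= s) gam /\ gam 0 = x /\
      conv_to xi (fun n => gam (INR n))) /\
  (forall xi eta : bnd, xi <> eta -> exists gam : R -> M,
      almost_geodesic C0 (fun _ => True) gam /\
      conv_to xi (fun n => gam (- INR n)) /\ conv_to eta (fun n => gam (INR n))).

Definition is_liminf (u : nat -> R) (l : R) : Prop :=
  (forall eps, 0 < eps -> exists N, forall n, (N <= n)%nat -> l - eps < u n) /\
  (forall eps, 0 < eps -> forall N, exists n, (N <= n)%nat /\ u n < l + eps).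

Definition is_glb (E : R -> Prop) (m : R) : Prop :=
  (forall v, E v -> m <= v) /\ (forall m', (forall v, E v -> m' <= v) -> m' <= m).

Definition bnd_gprod_spec (gp : bnd -> bnd -> R) : Prop :=
  forall xi eta, xi <> eta ->
    is_glb (fun v => exists x y, conv_to xi x /\ conv_to eta y /\
              is_liminf (fun i => gprod o (x i) (y i)) v) (gp xi eta).

Definition visual_metric (alpha : R) (gp : bnd -> bnd -> R) (dv : bnd -> bnd -> R) : Prop :=
  (forall xi eta, 0 <= dv xi eta) /\ (forall xi eta, dv xi eta = 0 <-> xi = eta) /\
  (forall xi eta, dv xi eta = dv eta xi) /\
  (forall xi eta zeta, dv xi zeta <= dv xi eta + dv eta zeta) /\
  exists B, forall xi eta, xi <> eta ->
    exists b, Rabs b <= B /\ dv xi eta = Rpower alpha (gp xi eta + b).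

(** K ⊂ ∂²Γ is compact (topology of ∂²Γ ⊂ ∂Γ × ∂Γ, ∂Γ metrized by dv). *)
Definition compact2 (dv : bnd -> bnd -> R) (K : bnd -> bnd -> Prop) : Prop :=
  (forall xi eta, K xi eta -> xi <> eta) /\
  forall u v : nat -> bnd, (forall n, K (u n) (v n)) ->
    exists (phi : nat -> nat) xi eta, (forall n, (phi n < phi (S n))%nat) /\
      K xi eta /\ Un_cv (fun n => dv (u (phi n)) xi) 0 /\
      Un_cv (fun n => dv (v (phi n)) eta) 0.

End Hyp.

Definition is_group {G : Type} (mul : G -> G -> G) (one : G) (inv : G -> G) : Prop :=
  (forall a b c, mul a (mul b c) = mul (mul a b) c) /\
  (forall a, mul one a = a) /\ (forall a, mul a one = a) /\
  (forall a, mul (inv a) a = one) /\ (forall a, mul a (inv a) = one).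

Definition isometric_action {G M : Type} (d : M -> M -> R)
  (mul : G -> G -> G) (one : G) (act : G -> M -> M) : Prop :=
  (forall x, act one x = x) /\ (forall g h x, act (mul g h) x = act g (act h x)) /\
  (forall g x y, d (act g x) (act g y) = d x y).

Definition proper_action {G M : Type} (d : M -> M -> R) (act : G -> M -> M) (o : M) : Prop :=
  forall r, exists l : list G, forall g, d o (act g o) <= r -> In g l.

Definition cocompact_action {G M : Type} (d : M -> M -> R) (act : G -> M -> M) (o : M) : Prop :=
  exists r, forall x, exists g, d x (act g o) <= r.

Definition countable_type (G : Type) : Prop :=
  exists f : G -> nat, forall a b, f a = f b -> a = b.

Definition bnd_action_spec {G M : Type} (d : M -> M -> R) (o : M) (act : G -> M -> M)
  (bact : G -> bnd d o -> bnd d o) : Prop :=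
  forall g xi x, conv_to d o xi x -> conv_to d o (bact g xi) (fun n => act g (x n)).

(** Busemann cocycle sigma(g,xi) = limsup_{x -> xi} (d(g^{-1}o,x) - d(o,x)). *)
Definition busemann_spec {G M : Type} (d : M -> M -> R) (o : M) (inv : G -> G)
  (act : G -> M -> M) (sigma : G -> bnd d o -> R) : Prop :=
  forall g xi,
    (forall x, conv_to d o xi x -> forall eps, 0 < eps ->
       exists N, forall n, (N <= n)%nat ->
         d (act (inv g) o) (x n) - d o (x n) < sigma g xi + eps) /\
    (exists x, conv_to d o xi x /\
       Un_cv (fun n => d (act (inv g) o) (x n) - d o (x n)) (sigma g xi)).

Definition non_elementary_bnd {M : Type} (d : M -> M -> R) (o : M) : Prop :=
  exists a b c : bnd d o, a <> b /\ b <> c /\ a <> c.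

(* Main.v *)
Require Import Defs.
From Stdlib Require Import Reals List Lra Lia ZArith Classical ClassicalEpsilon.
Open Scope R_scope.

Lemma gprod_sym {M} (d : M -> M -> R) (HM : is_metric d) w x y :
  gprod d w x y = gprod d w y x.
Proof. destruct HM as (_&_&Hs&_). unfold gprod. rewrite (Hs x y). lra. Qed.

Lemma gprod_nonneg {M} (d : M -> M -> R) (HM : is_metric d) w x y :
  0 <= gprod d w x y.
Proof.
  destruct HM as (_&_&Hs&Ht). unfold gprod.
  pose proof (Ht x w y). rewrite (Hs w y) in H. lra.
Qed.

Definition hyp4 {M} (d : M -> M -> R) (delta : R) :=
  forall x y z w, Rmin (gprod d w x y) (gprod d w y z) - delta <= gprod d w x z.

Lemma four2 {M} (d : M -> M -> R) delta (H : hyp4 d delta) w a b c L :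
  L <= gprod d w a b -> L <= gprod d w b c -> L - delta <= gprod d w a c.
Proof.
  intros h1 h2. pose proof (H a b c w). unfold Rmin in H0.
  destruct (Rle_dec _ _); lra.
Qed.

Lemma four3 {M} (d : M -> M -> R) delta (H : hyp4 d delta) (Hd : 0 <= delta) w a b c e L :
  L <= gprod d w a b -> L <= gprod d w b c -> L <= gprod d w c e ->
  L - 2 * delta <= gprod d w a e.
Proof.
  intros h1 h2 h3.
  assert (L - delta <= gprod d w a c) by exact (four2 d delta H w a b c L h1 h2).
  assert (L - delta <= gprod d w c e) by lra.
  pose proof (four2 d delta H w a c e (L - delta) H0 H1). lra.
Qed.

Lemma same_class {M} (d : M -> M -> R) (o : M) (HM : is_metric d) delta
  (H : hyp4 d delta) (xi : bnd d o) x x' :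
  conv_to d o xi x -> conv_to d o xi x' ->
  forall N, exists n0, forall m n, (n0 <= m)%nat -> (n0 <= n)%nat ->
    N <= gprod d o (x m) (x' n).
Proof.
  intros h1 h2 N. destruct (proj2_sig xi) as [z [_ Hz]]. unfold conv_to in *.
  apply Hz in h1. apply Hz in h2. destruct h1 as [_ e1]. destruct h2 as [_ e2].
  destruct (e1 (N + delta)) as [n1 E1]. destruct (e2 (N + delta)) as [n2 E2].
  exists (Nat.max n1 n2). intros m n hm hn.
  set (k := Nat.max n1 n2).
  assert (a1 : N + delta <= gprod d o (x m) (z k)).
  { rewrite gprod_sym by auto. apply E1; unfold k; lia. }
  assert (a2 : N + delta <= gprod d o (z k) (x' n)) by (apply E2; unfold k; lia).
  pose proof (four2 d delta H o _ _ _ _ a1 a2). lra.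
Qed.

Lemma LB_lemma {M} (d : M -> M -> R) (o : M) (HM : is_metric d) delta
  (H : hyp4 d delta) (Hd : 0 <= delta) gp (Hgp : bnd_gprod_spec d o gp)
  (xi eta : bnd d o) X Y L :
  xi <> eta -> conv_to d o xi X -> conv_to d o eta Y ->
  (forall N, exists m, (N <= m)%nat /\ L <= gprod d o (X m) (Y m)) ->
  L - 2 * delta <= gp xi eta.
Proof.
  intros hne hX hY hL. destruct (Hgp xi eta hne) as [_ Hglb]. apply Hglb.
  intros v (u & w & hu & hw & [_ hli]).
  destruct (Rle_dec (L - 2 * delta) v) as [ok|nok]; [exact ok|exfalso].
  set (eps := (L - 2 * delta - v) / 2).
  destruct (same_class d o HM delta H xi u X hu hX L) as [n1 E1].
  destruct (same_class d o HM delta H eta Y w hY hw L) as [n2 E2].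
  destruct (hli eps ltac:(unfold eps; lra) (Nat.max n1 n2)) as [n [hn hv]].
  destruct (hL (Nat.max n1 n2)) as [m [hm hXY]].
  assert (h1 : L <= gprod d o (u n) (X m)) by (apply E1; lia).
  assert (h3 : L <= gprod d o (Y m) (w n)) by (apply E2; lia).
  pose proof (four3 d delta H Hd o _ _ _ _ _ h1 hXY h3). unfold eps in hv. lra.
Qed.

Lemma UB_lemma {M} (d : M -> M -> R) (o : M) (HM : is_metric d) delta
  (H : hyp4 d delta) (Hd : 0 <= delta) gp (Hgp : bnd_gprod_spec d o gp)
  (xi eta : bnd d o) X Y :
  xi <> eta -> conv_to d o xi X -> conv_to d o eta Y ->
  forall eps N, 0 < eps -> exists n, (N <= n)%nat /\
    gprod d o (X n) (Y n) <= gp xi eta + 2 * delta + eps.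
Proof.
  intros hne hX hY eps N he.
  apply NNPP. intro hno.
  assert (hL : forall N', exists m, (N' <= m)%nat /\
     gp xi eta + 2 * delta + eps <= gprod d o (X m) (Y m)).
  { intro N'. exists (Nat.max N N'). split; [lia|].
    destruct (Rle_dec (gp xi eta + 2 * delta + eps) (gprod d o (X (Nat.max N N')) (Y (Nat.max N N')))) as [ok|nok]; [exact ok|].
    exfalso. apply hno. exists (Nat.max N N'). split; [lia|lra]. }
  pose proof (LB_lemma d o HM delta H Hd gp Hgp xi eta X Y _ hne hX hY hL). lra.
Qed.
Lemma phi_ge (phi : nat -> nat) : (forall n, (phi n < phi (S n))%nat) -> forall n, (n <= phi n)%nat.
Proof. intros H n; induction n; [lia|]. specialize (H n). lia. Qed.

Lemma K_dv_lb {B : Type} (dv : B -> B -> R) (K : B -> B -> Prop)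
  (Hsym : forall x y, dv x y = dv y x)
  (Htri : forall x y z, dv x z <= dv x y + dv y z)
  (H0 : forall x y, dv x y = 0 <-> x = y) (Hpos : forall x y, 0 <= dv x y)
  (HK : (forall xi eta, K xi eta -> xi <> eta) /\
    forall u v : nat -> B, (forall n, K (u n) (v n)) ->
    exists (phi : nat -> nat) xi eta, (forall n, (phi n < phi (S n))%nat) /\
      K xi eta /\ Un_cv (fun n => dv (u (phi n)) xi) 0 /\
      Un_cv (fun n => dv (v (phi n)) eta) 0) :
  exists c, 0 < c /\ forall xi eta, K xi eta -> c <= dv xi eta.
Proof.
  apply NNPP; intro hno.
  assert (h : forall n : nat, exists p : B * B, K (fst p) (snd p) /\ dv (fst p) (snd p) < / (INR n + 1)).
  { intro n. apply NNPP; intro h2. apply hno. exists (/ (INR n + 1)). split.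
    { apply Rinv_0_lt_compat. pose proof (pos_INR n). lra. }
    intros xi eta hK. destruct (Rle_dec (/ (INR n + 1)) (dv xi eta)) as [ok|nok]; [exact ok|].
    exfalso. apply h2. exists (xi, eta). simpl. split; [auto|lra]. }
  set (f := fun n => proj1_sig (constructive_indefinite_description _ (h n))).
  assert (hf : forall n, K (fst (f n)) (snd (f n)) /\ dv (fst (f n)) (snd (f n)) < / (INR n + 1)).
  { intro n. unfold f. exact (proj2_sig (constructive_indefinite_description _ (h n))). }
  destruct HK as [Hne Hc].
  destruct (Hc (fun n => fst (f n)) (fun n => snd (f n)) (fun n => proj1 (hf n)))
    as (phi & xi & eta & hphi & hK & c1 & c2).
  apply (Hne xi eta hK). apply H0.
  apply Rle_antisym; [|apply Hpos].
  apply Rnot_lt_le; intro hlt.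
  set (e := dv xi eta / 3).
  assert (he : 0 < e) by (unfold e; lra).
  destruct (c1 e he) as [N1 E1]. destruct (c2 e he) as [N2 E2].
  destruct (archimed (/ e)) as [ar _].
  set (n := Nat.max (Nat.max N1 N2) (Z.to_nat (up (/ e)))).
  specialize (E1 n ltac:(unfold n; lia)). specialize (E2 n ltac:(unfold n; lia)).
  unfold R_dist in E1, E2. rewrite Rminus_0_r in E1, E2.
  rewrite Rabs_pos_eq in E1 by apply Hpos. rewrite Rabs_pos_eq in E2 by apply Hpos.
  pose proof (proj2 (hf (phi n))) as E3.
  assert (hn : / e < INR (phi n) + 1).
  { assert (IZR (up (/ e)) <= INR n).
    { assert (0 <= up (/ e))%Z.
      { apply le_IZR. assert (0 < / e) by (apply Rinv_0_lt_compat; lra). lra. }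
      rewrite <- (Z2Nat.id (up (/ e))) by lia. rewrite <- INR_IZR_INZ.
      apply le_INR. unfold n; lia. }
    pose proof (le_INR _ _ (phi_ge phi hphi n)). lra. }
  assert (/ (INR (phi n) + 1) < e).
  { assert (0 < / e) by (apply Rinv_0_lt_compat; lra).
    rewrite <- (Rinv_inv e). apply Rinv_lt_contravar; [nra|exact hn]. }
  pose proof (Htri xi (fst (f (phi n))) eta) as T1.
  pose proof (Htri (fst (f (phi n))) (snd (f (phi n))) eta) as T2.
  rewrite (Hsym xi (fst (f (phi n)))) in T1.
  unfold e in *. lra.
Qed.
Lemma ucv {u : nat -> R} {l} : Un_cv u l -> forall eps, 0 < eps ->
  exists N, forall n, (N <= n)%nat -> l - eps < u n < l + eps.
Proof.
  intros H eps he. destruct (H eps he) as [N HN]. exists N. intros n hn.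
  specialize (HN n hn). unfold R_dist in HN. apply Rabs_def2 in HN. lra.
Qed.

Lemma ucv_le (u : nat -> R) l Mx : Un_cv u l -> (forall n, u n <= Mx) -> l <= Mx.
Proof.
  intros H hM. apply Rnot_lt_le; intro hlt.
  destruct (ucv H ((l - Mx)/2) ltac:(lra)) as [N HN].
  specialize (HN N (le_n _)). specialize (hM N). lra.
Qed.

Lemma Rpower_pos' a x : 0 < Rpower a x.
Proof. unfold Rpower. apply exp_pos. Qed.

Lemma Rpower_dec a x y : 0 < a < 1 -> x < y -> Rpower a y < Rpower a x.
Proof.
  intros ha hxy. unfold Rpower. apply exp_increasing.
  assert (ln a < 0). { rewrite <- ln_1. apply ln_increasing; lra. }
  nra.
Qed.

Lemma Rpower_ge a z c : 0 < a < 1 -> 0 < c -> c <= Rpower a z -> z <= ln c / ln a.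
Proof.
  intros ha hc h. unfold Rpower in h.
  assert (la : ln a < 0). { rewrite <- ln_1. apply ln_increasing; lra. }
  assert (ln c <= z * ln a).
  { destruct (Rle_lt_or_eq_dec _ _ h) as [hl|he].
    - left. rewrite <- (ln_exp (z * ln a)). apply ln_increasing; auto.
    - rewrite he, ln_exp. lra. }
  apply (Rmult_le_reg_r (- ln a)); [lra|].
  replace (ln c / ln a * - ln a) with (- ln c) by (field; lra). nra.
Qed.

Lemma gprod_shift {M} (d : M -> M -> R) (HM : is_metric d) p o u v :
  gprod d p u v = gprod d o u v + ((d p u - d o u) + (d p v - d o v)) / 2.
Proof.
  destruct HM as (_&_&Hs&_). unfold gprod.
  rewrite (Hs u p), (Hs v p), (Hs u o), (Hs v o). lra.
Qed.

Theorem mainTheorem8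
  (M : Type) (d : M -> M -> R) (o : M)
  (G : Type) (mul : G -> G -> G) (one : G) (inv : G -> G) (act : G -> M -> M)
  (bact : G -> bnd d o -> bnd d o)
  (gp : bnd d o -> bnd d o -> R) (sigma : G -> bnd d o -> R)
  (alpha : R) (dv : bnd d o -> bnd d o -> R)
  (HM : is_metric d) (Hhyp : gromov_hyperbolic d) (Hprop : proper_space d)
  (Hqc : quasi_convex_space d o)
  (HG : is_group mul one inv) (Hcount : countable_type G)
  (Hact : isometric_action d mul one act) (Hpa : proper_action d act o)
  (Hcc : cocompact_action d act o) (Hne : non_elementary_bnd d o)
  (Hbact : bnd_action_spec d o act bact)
  (Hgp : bnd_gprod_spec d o gp) (Hsigma : busemann_spec d o inv act sigma)
  (Halpha : 0 < alpha < 1) (Hdv : visual_metric d o alpha gp dv) :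
  forall K : bnd d o -> bnd d o -> Prop, compact2 d o dv K ->
  exists C : R, forall (xi eta eta' : bnd d o) (g : G),
    K xi eta -> K xi eta' -> K (bact g xi) (bact g eta) -> sigma g xi < 0 ->
    let t := - sigma g xi in
    (t - C <= sigma g eta <= t + C) /\ (t - C <= sigma g eta' <= t + C) /\
    dv (bact g eta) (bact g eta') < Rpower alpha (t - C).
Proof.
  intros K HK.
  destruct Hhyp as [delta [Hd H4]].
  assert (H4' : hyp4 d delta) by exact H4.
  destruct Hdv as (dpos & d0 & dsym & dtri & [B HB]).
  destruct (K_dv_lb dv K dsym dtri d0 dpos HK) as [c [hc Hc]].
  set (D := Rabs (ln c / ln alpha) + Rabs B).
  assert (D0 : 0 <= D) by (unfold D; pose proof (Rabs_pos (ln c / ln alpha)); pose proof (Rabs_pos B); lra).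
  assert (HD : forall xi eta, K xi eta -> gp xi eta <= D).
  { intros xi eta hK. destruct (HB xi eta (proj1 HK xi eta hK)) as [b [hb hdv]].
    pose proof (Hc xi eta hK) as h. rewrite hdv in h.
    pose proof (Rpower_ge alpha _ c Halpha hc h).
    pose proof (Rle_abs (ln c / ln alpha)). pose proof (Rle_abs B).
    pose proof (Rle_abs (-b)) as hb'. rewrite Rabs_Ropp in hb'. unfold D. lra. }
  set (C2 := 2 * D + 4 * delta + 1).
  set (C3 := 4 * D + 10 * delta + 3).
  exists (C2 + C3 + 2 * delta + Rabs B + 1).
  intros xi eta eta' g h1 h2 h3 h4. cbv zeta.
  set (t := - sigma g xi).
  set (p := act (inv g) o).
  destruct Hact as (Ha1 & Ha2 & Ha3).
  destruct HG as (G1 & G2 & G3 & G4 & G5).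
  assert (hiso : forall u v, gprod d o (act g u) (act g v) = gprod d p u v).
  { intros u v. destruct HM as (_&_&Hs&_).
    assert (e : forall z, d o (act g z) = d p z).
    { intro z. unfold p. rewrite <- (Ha3 (inv g) o (act g z)).
      rewrite <- Ha2, G4, Ha1. reflexivity. }
    unfold gprod. rewrite Ha3, (Hs (act g u)), (Hs (act g v)), !e, (Hs u p), (Hs v p).
    reflexivity. }
  destruct (proj2 (Hsigma g xi)) as [x [hx cx]].
  destruct (proj2 (Hsigma g eta)) as [y [hy cy]].
  destruct (proj2 (Hsigma g eta')) as [y' [hy' cy']].
  fold p in cx, cy, cy'.
  assert (LOW : forall zeta z, K xi zeta -> conv_to d o zeta z ->
            Un_cv (fun n => d p (z n) - d o (z n)) (sigma g zeta) ->
            t - C2 <= sigma g zeta).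
  { intros zeta z hK hz cz.
    destruct (ucv cx (1/4) ltac:(lra)) as [N1 E1].
    destruct (ucv cz (1/4) ltac:(lra)) as [N2 E2].
    destruct (UB_lemma d o HM delta H4' Hd gp Hgp xi zeta x z (proj1 HK _ _ hK) hx hz
                (1/4) (Nat.max N1 N2) ltac:(lra)) as [n [hn hle]].
    specialize (E1 n ltac:(lia)). specialize (E2 n ltac:(lia)).
    pose proof (HD _ _ hK).
    pose proof (gprod_nonneg d HM p (x n) (z n)).
    rewrite (gprod_shift d HM p o) in H0. unfold t, C2. lra. }
  assert (Leta : t - C2 <= sigma g eta) by exact (LOW eta y h1 hy cy).
  assert (Leta' : t - C2 <= sigma g eta') by exact (LOW eta' y' h2 hy' cy').
  assert (Ueta : sigma g eta <= t + C2).
  { destruct (ucv cx (1/4) ltac:(lra)) as [N1 E1].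
    destruct (ucv cy (1/4) ltac:(lra)) as [N2 E2].
    destruct (UB_lemma d o HM delta H4' Hd gp Hgp (bact g xi) (bact g eta)
                (fun n => act g (x n)) (fun n => act g (y n)) (proj1 HK _ _ h3)
                (Hbact g xi x hx) (Hbact g eta y hy)
                (1/4) (Nat.max N1 N2) ltac:(lra)) as [n [hn hle]].
    specialize (E1 n ltac:(lia)). specialize (E2 n ltac:(lia)).
    pose proof (HD _ _ h3).
    rewrite hiso, (gprod_shift d HM p o) in hle.
    pose proof (gprod_nonneg d HM o (x n) (y n)).
    unfold t, C2. lra. }
  assert (Dist : d p o <= t + C3).
  { destruct (ucv cx (1/4) ltac:(lra)) as [N1 E1].
    destruct (ucv cy (1/4) ltac:(lra)) as [N2 E2].
    destruct (UB_lemma d o HM delta H4' Hd gp Hgp xi eta x y (proj1 HK _ _ h1) hx hy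
                (1/4) (Nat.max N1 N2) ltac:(lra)) as [n [hn hle]].
    specialize (E1 n ltac:(lia)). specialize (E2 n ltac:(lia)).
    pose proof (HD _ _ h1).
    pose proof (H4 (x n) p (y n) o) as h4p.
    destruct HM as (_&_&Hs&_).
    unfold gprod in h4p at 1 2. rewrite (Hs (x n) p), (Hs (x n) o), (Hs (y n) o) in h4p.
    unfold Rmin in h4p. unfold t, C3, C2 in *.
    destruct (Rle_dec _ _) in h4p; lra. }
  assert (Ueta' : sigma g eta' <= t + C3).
  { assert (sigma g eta' <= d p o).
    { apply (ucv_le _ _ _ cy'). intro n. destruct HM as (_&_&Hs&Ht).
      pose proof (Ht p o (y' n)). lra. }
    lra. }
  pose proof (Rabs_pos B).
  split; [unfold C2, C3 in *; lra|]. split; [unfold C2, C3 in *; lra|].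
  destruct (classic (bact g eta = bact g eta')) as [heq|hneq].
  { rewrite heq. rewrite (proj2 (d0 _ _) eq_refl). apply Rpower_pos'. }
  destruct (HB _ _ hneq) as [b [hb hdv]]. rewrite hdv.
  assert (LB : t - C2 - 1/2 - 2 * delta <= gp (bact g eta) (bact g eta')).
  { apply (LB_lemma d o HM delta H4' Hd gp Hgp _ _ (fun n => act g (y n)) (fun n => act g (y' n))
             (t - C2 - 1/2) hneq (Hbact g eta y hy) (Hbact g eta' y' hy')).
    intro N.
    destruct (ucv cy (1/2) ltac:(lra)) as [N1 E1].
    destruct (ucv cy' (1/2) ltac:(lra)) as [N2 E2].
    exists (Nat.max N (Nat.max N1 N2)). split; [lia|].
    specialize (E1 (Nat.max N (Nat.max N1 N2)) ltac:(lia)).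
    specialize (E2 (Nat.max N (Nat.max N1 N2)) ltac:(lia)).
    rewrite hiso, (gprod_shift d HM p o).
    pose proof (gprod_nonneg d HM o (y (Nat.max N (Nat.max N1 N2))) (y' (Nat.max N (Nat.max N1 N2)))).
    lra. }
  apply Rpower_dec; [exact Halpha|].
  pose proof (Rle_abs (-b)) as hb'. rewrite Rabs_Ropp in hb'.
  pose proof (Rle_abs B). unfold C2, C3 in *. lra.
Qed.
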